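(* Let $X$ be a set, $m\ge 1$, and let $\phi_1,\phi_2:X\times X\to\mathbb{C}$ be two functions such that, for $\phi=\phi_1$ and for $\phi=\phi_2$: (i) $\phi(x,y)=-\phi(y,x)$ for all $x,y\in X$; (ii) $\phi(x_1,x_2)\phi(x_3,x_4)-\phi(x_1,x_3)\phi(x_2,x_4)+\phi(x_1,x_4)\phi(x_2,x_3)=0$ for all $x_1,x_2,x_3,x_4\in X$. For $(x_1,\ldots,x_{2m})\in X^{2m}$ with $\phi_2(x_i,x_j)\neq 0$ for all $i\neq j$, define \[ \Delta_{2m}(x_1,\ldots,x_{2m})=\frac{\det_{1\le i\le m,\ m+1\le j\le 2m}\left(\dfrac{\phi_1(x_i,x_j)}{\phi_2(x_i,x_j)}\right)}{\prod_{1\le i<j\le m}\phi_2(x_i,x_j)\ \prod_{m+1\le i<j\le 2m}\phi_2(x_i,x_j)}. \] Then $\Delta_{2m}$ is a symmetric function of all its $2m$ arguments $x_1,\ldots,x_{2m}$ (on this domain).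
   Context: The determinant is of the $m\times m$ matrix with rows indexed by $i=1,\ldots,m$ and columns by $j=m+1,\ldots,2m$. *)

(* Defs.v *)
From HB Require Import structures.
From mathcomp Require Import all_boot all_order all_algebra all_fingroup.
Set Implicit Arguments. Unset Strict Implicit. Unset Printing Implicit Defensive.
Import Order.TTheory GRing.Theory Num.Theory.
Local Open Scope ring_scope.

(* Indices 1..2m are represented by 'I_(m + m): the first block
   (lshift m i, i < m) corresponds to x_1..x_m, the second block
   (rshift m j, j < m) corresponds to x_{m+1}..x_{2m}. *)

Definition antisym (C : numClosedFieldType) (X : Type) (phi : X -> X -> C) :=
  forall x y, phi x y = - phi y x.

Definition plucker3 (C : numClosedFieldType) (X : Type) (phi : X -> X -> C) :=
  forall x1 x2 x3 x4,
    phi x1 x2 * phi x3 x4 - phi x1 x3 * phi x2 x4 + phi x1 x4 * phi x2 x3 = 0.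

Definition Delta (C : numClosedFieldType) (X : Type) (phi1 phi2 : X -> X -> C)
    (m : nat) (x : 'I_(m + m) -> X) : C :=
  \det (\matrix_(i < m, j < m)
          (phi1 (x (lshift m i)) (x (rshift m j)) /
           phi2 (x (lshift m i)) (x (rshift m j))))
  / ((\prod_(i < m) \prod_(j < m | (i < j)%N)
         phi2 (x (lshift m i)) (x (lshift m j)))
     * (\prod_(i < m) \prod_(j < m | (i < j)%N)
         phi2 (x (rshift m i)) (x (rshift m j)))).

(* Main.v *)
Require Import Defs.
From HB Require Import structures.
From mathcomp Require Import all_boot all_order all_algebra all_fingroup.
From mathcomp Require Import ring zify.
Import Order.TTheory GRing.Theory Num.Theory.
Local Open Scope ring_scope.
Set Implicit Arguments. Unset Strict Implicit. Unset Printing Implicit Defensive.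

Lemma prod_nz (F : fieldType) (I : finType) (A : {set I}) (f : I -> F) :
  (forall y, y \in A -> f y != 0) -> \prod_(y in A) f y != 0.
Proof. by move=> H; rewrite prodf_seq_neq0; apply/allP => y _; apply/implyP; exact: H. Qed.

Section Core.
Variable C : fieldType.
Variable N : nat.
Variable w : 'I_N -> 'I_N -> C.
Hypothesis wA : forall i j, w i j = - w j i.
Hypothesis w0 : forall i, w i i = 0.
Hypothesis wP : forall i j k l, w i j * w k l - w i k * w j l + w i l * w j k = 0.
Hypothesis wnz : forall i j, i != j -> w i j != 0.

Lemma wdec b r z p : w r p != 0 ->
  w b z = (w b r * w z p + w b p * w r z) / w r p.
Proof.
move=> nz; apply: (canRL (mulfK nz)).
have H := wP b r z p.
rewrite -(addr0 (w b z * w r p)) -H; ring.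
Qed.

Lemma setD1C (A : {set 'I_N}) a b : A :\ a :\ b = A :\ b :\ a.
Proof. by apply/setP=> x; rewrite !inE; case: (x == a); case: (x == b). Qed.

Lemma lagr n : forall (R B : {set 'I_N}) p, p \notin R -> #|R| = n.+1 -> #|B| = n ->
  \sum_(z in R) (\prod_(b in B) w b z) * \prod_(y in R :\ z) (w y p / w y z)
  = \prod_(b in B) w b p.
Proof.
elim: n => [|n IH] R B p pR cR cB.
  have -> : B = set0 by apply/eqP; rewrite -cards_eq0 cB.
  have /cards1P [r ->] : #|R| == 1%N by rewrite cR.
  by rewrite big_set1 setDv !big_set0 mulr1.
have [b bB] : exists b, b \in B by apply/set0Pn; rewrite -card_gt0 cB.
have [r rR] : exists r, r \in R by apply/set0Pn; rewrite -card_gt0 cR.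
have cB' : #|B :\ b| = n by move: cB; rewrite (cardsD1 b) bB => -[].
have cR' : #|R :\ r| = n.+1 by move: cR; rewrite (cardsD1 r) rR => -[].
have rp : r != p by apply: contraNneq pR => <-.
have wrp : w r p != 0 by exact: wnz.
set g := fun z => \prod_(b0 in B :\ b) w b0 z.
set Pi := fun (S : {set 'I_N}) (q z : 'I_N) => \prod_(y in S :\ z) (w y q / w y z).
have claim2 : \sum_(z in R) g z * w r z * Pi R p z = w r p * g p.
  rewrite (big_setD1 r rR) /= w0 mulr0 mul0r add0r.
  rewrite {2}/g -(IH (R :\ r) (B :\ b) p) //; last by rewrite !inE negb_and pR orbT.
  rewrite mulr_sumr; apply: eq_bigr => z; rewrite !inE => /andP [zr zR].
  rewrite /Pi (big_setD1 r); last by rewrite !inE eq_sym zr rR.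
  rewrite setD1C.
  have wrz : w r z != 0 by apply: wnz; rewrite eq_sym.
  rewrite /= /g; field; exact: wrz.
have claim1 : \sum_(z in R) g z * w z p * Pi R p z = 0.
  have K0 : \prod_(y in R :\ r) w y r != 0.
    by apply: prod_nz => y; rewrite !inE => /andP [yr _]; apply: wnz.
  have : \sum_(z in R) g z / \prod_(y in R :\ z) w y z = 0.
    rewrite (big_setD1 r rR) /=.
    have := IH (R :\ r) (B :\ b) r; rewrite !inE eqxx /= => /(_ isT cR' cB') H.
    apply: (mulIf K0); rewrite mul0r mulrDl divfK // /g -H mulr_suml.
    rewrite -big_split /= big1 // => z; rewrite !inE => /andP [zr zR].
    rewrite [X in _ / X](big_setD1 r); last by rewrite !inE rR andbT eq_sym.
    rewrite (setD1C R z r) [\prod_(y in R :\ r) w y r](big_setD1 z); last by rewrite !inE zr zR.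
    have wrz : w r z != 0 by apply: wnz; rewrite eq_sym.
    have Q0 : \prod_(y in R :\ r :\ z) w y z != 0.
      by apply: prod_nz => y; rewrite !inE => /andP [yz _]; apply: wnz.
    rewrite prodf_div (wA z r) /=.
    by field; rewrite wrz Q0.
  move=> Z; transitivity ((\prod_(y in R) w y p) * \sum_(z in R) g z / \prod_(y in R :\ z) w y z);
    last by rewrite Z mulr0.
  rewrite mulr_sumr.
  apply: eq_bigr => z zR; rewrite /Pi (big_setD1 z zR) prodf_div /=; ring.
transitivity (\sum_(z in R) ((w b r / w r p) * (g z * w z p * Pi R p z)
   + (w b p / w r p) * (g z * w r z * Pi R p z))).
  apply: eq_bigr => z zR; rewrite (big_setD1 b bB) (wdec b z wrp) /Pi /g /=; ring.
rewrite big_split /= -!mulr_sumr claim1 claim2 mulr0 add0r (big_setD1 b bB) /g /=.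
by field.
Qed.

Lemma prodIf (X : {set 'I_N}) (f : 'I_N -> C) :
  \prod_(j in X) f j = \prod_j (if j \in X then f j else 1).
Proof. exact: big_mkcond. Qed.

Lemma prodm1 (X : {set 'I_N}) : \prod_(j in X) (-1 : C) = (-1) ^+ #|X|.
Proof. by rewrite prodr_const. Qed.

Variables (c d : 'I_N -> C).
Definition W (S T : {set 'I_N}) := \prod_(i in S) \prod_(j in T) w i j.
Definition Tm (S A : {set 'I_N}) :=
  (\prod_(i in S) c i) * (\prod_(j in A :\: S) d j) / W S (A :\: S).
Definition F (A : {set 'I_N}) :=
  \sum_(S : {set 'I_N} | (S \subset A) && (#|S|.*2 == #|A|)) Tm S A.

Lemma W_nz (S T : {set 'I_N}) : [disjoint S & T] -> W S T != 0.
Proof.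
move=> dST; apply: prod_nz => i iS; apply: prod_nz => j jT; apply: wnz.
by apply: contraTneq jT => <-; rewrite (disjointFr dST iS).
Qed.

Section Star.
Variables (n : nat) (p : 'I_N) (P Q : {set 'I_N}).
Hypotheses (pP : p \notin P) (pQ : p \notin Q) (dPQ : [disjoint P & Q])
  (cP : #|P| = n) (cQ : #|Q| = n.+1).
Definition A := p |: (P :|: Q).
Definition D z := w p z * \prod_(y in P) w y p * \prod_(y in Q :\ z) w z y.

Lemma hPQ j : (j \in P) && (j \in Q) = false.
Proof. by apply/negbTE; apply/andP => -[jP jQ]; rewrite (disjointFr dPQ jP) in jQ. Qed.

Lemma D_nz z : z \in Q -> D z != 0.
Proof.
move=> zQ; rewrite /D !mulf_neq0 //.
- by apply: wnz; apply: contraNneq pQ => ->.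
- by apply: prod_nz => y yP; apply: wnz; apply: contraNneq pP => <-.
- by apply: prod_nz => y; rewrite !inE => /andP [yz _]; apply: wnz; rewrite eq_sym.
Qed.

Lemma ratioA (S : {set 'I_N}) z : S \subset A -> p \in S -> #|S| = n.+1 -> z \in Q -> z \notin S ->
  W S (A :\: S) / (D z * W (S :\ p) (A :\: S :\ z)) =
  \prod_(b in P :&: S) w b z * \prod_(y in Q :\: S :\ z) (w y p / w y z)
     / \prod_(b in P :&: S) w b p.
Proof.
move=> SA pS cS zQ zS.
have hS j : j \in S -> [|| j == p, j \in P | j \in Q].
  by move/(subsetP SA); rewrite !inE.
have zT : z \in A :\: S by rewrite !inE zS zQ !orbT.
have zp : z != p by apply: contraNneq pQ => <-.
set T := A :\: S.
have -> : W S T = \prod_(j in T :\ z) w p j * \prod_(i in S :\ p) w i z * W (S :\ p) (T :\ z) * w p z.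
  rewrite /W (big_setD1 p pS) /= (big_setD1 z zT) /=.
  rewrite [\prod_(i in S :\ p) \prod_(j in T) w i j](eq_bigr (fun i => w i z * \prod_(j in T :\ z) w i j)); last first.
    by move=> i _; rewrite (big_setD1 z zT).
  rewrite big_split /=; ring.
have WT0 : W (S :\ p) (T :\ z) != 0.
  apply: W_nz; rewrite -setI_eq0; apply/eqP/setP => j; rewrite !inE.
  by case: (j \in S) => //; rewrite !andbF.
have wpz : w p z != 0 by apply: wnz; rewrite eq_sym.
have Dz := D_nz zQ.
have -> : \prod_(j in T :\ z) w p j * \prod_(i in S :\ p) w i z * W (S :\ p) (T :\ z) * w p z /
   (D z * W (S :\ p) (T :\ z)) = \prod_(j in T :\ z) w p j * \prod_(i in S :\ p) w i z /
   (\prod_(y in P) w y p * \prod_(y in Q :\ z) w z y).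
  by rewrite /D; field; rewrite WT0 wpz /=; move: Dz; rewrite /D !mulf_eq0 !negb_or => /andP [/andP[_ ->] ->].
have cards : #|P :\: S| = #|Q :&: S|.
  have e1 := cardsID S P.
  have e2 : #|P :&: S| + #|Q :&: S| = n.
    have := cardsD1 p S; rewrite pS cS add1n => -[] ->.
    rewrite -(cardsID P (S :\ p)).
    have -> : (S :\ p) :&: P = P :&: S.
      apply/setP => j; rewrite !inE.
      by case: (eqVneq j p) => [->|jp]; rewrite ?(negbTE pP) ?andbF //= andbC.
    congr (_ + _); apply: eq_card => j; rewrite !inE.
    case: (eqVneq j p) => [->|jp] /=; first by rewrite (negbTE pQ) andbF.
    case Sj: (j \in S); rewrite ?andbF //= ?andbT.
    move: (hS j Sj) (hPQ j); rewrite (negbTE jp) /=.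
    by case: (j \in P); case: (j \in Q).
  by move: e1; rewrite cP -e2 => /eqP; rewrite eqn_add2l => /eqP.
transitivity (\prod_(j in P :\: S) (-1) * \prod_(j in Q :&: S) (-1) *
  (\prod_(b in P :&: S) w b z * \prod_(y in Q :\: S :\ z) (w y p / w y z)
     / \prod_(b in P :&: S) w b p)); last first.
  by rewrite !prodm1 cards -exprMn mulrN1 opprK expr1n mul1r.
rewrite !prodIf -!big_split -!prodf_div -!big_split /=.
apply: eq_bigr => j _; rewrite /T /A !inE.
have zP : (z \in P) = false by exact: (disjointFl dPQ zQ).
case: (eqVneq j p) => [->|jp].
  by rewrite ?eqxx (negbTE pP) (negbTE pQ) pS eq_sym (negbTE zp) /= !(mul1r, mulr1, invr1).
case: (eqVneq j z) => [->|jz].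
  by rewrite ?eqxx zP zQ (negbTE zS) ?(negbTE zp) /= !(mul1r, mulr1, invr1).
have wjp : w j p != 0 by exact: wnz.
have wjz : w j z != 0 by exact: wnz.
rewrite (wA p j) (wA z j).
case Pj: (j \in P); case Qj: (j \in Q); case Sj: (j \in S); rewrite /=;
  move: (hPQ j) (hS j); rewrite Pj Qj Sj (negbTE jp) /= => H1 H2.
all: try by [].
all: try by case: (H2 isT).
all: by field; rewrite ?oppr_eq0 ?wjp ?wjz ?oner_neq0.
Qed.

Lemma ratioB (S : {set 'I_N}) z : S \subset A -> p \notin S -> #|S| = n.+1 -> z \in Q -> z \in S ->
  W S (A :\: S) / (D z * W (S :\ z) (A :\: S :\ p)) =
  - (\prod_(b in P :\: S) w b z * \prod_(y in Q :&: S :\ z) (w y p / w y z)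
     / \prod_(b in P :\: S) w b p).
Proof.
move=> SA pS cS zQ zS.
have hS j : j \in S -> [|| j == p, j \in P | j \in Q].
  by move/(subsetP SA); rewrite !inE.
have pT : p \in A :\: S by rewrite !inE pS eqxx.
have zp : z != p by apply: contraNneq pQ => <-.
set T := A :\: S.
have -> : W S T = \prod_(j in T :\ p) w z j * \prod_(i in S :\ z) w i p * W (S :\ z) (T :\ p) * w z p.
  rewrite /W (big_setD1 z zS) /= (big_setD1 p pT) /=.
  rewrite [\prod_(i in S :\ z) \prod_(j in T) w i j](eq_bigr (fun i => w i p * \prod_(j in T :\ p) w i j)); last first.
    by move=> i _; rewrite (big_setD1 p pT).
  rewrite big_split /=; ring.
have WT0 : W (S :\ z) (T :\ p) != 0.
  apply: W_nz; rewrite -setI_eq0; apply/eqP/setP => j; rewrite !inE.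
  by case: (j \in S) => //; rewrite !andbF.
have wpz : w p z != 0 by apply: wnz; rewrite eq_sym.
have Dz := D_nz zQ.
have -> : \prod_(j in T :\ p) w z j * \prod_(i in S :\ z) w i p * W (S :\ z) (T :\ p) * w z p /
   (D z * W (S :\ z) (T :\ p)) = - (\prod_(j in T :\ p) w z j * \prod_(i in S :\ z) w i p /
   (\prod_(y in P) w y p * \prod_(y in Q :\ z) w z y)).
  rewrite /D (wA z p); field; rewrite WT0 wpz /=.
  by move: Dz; rewrite /D !mulf_eq0 !negb_or => /andP [/andP[_ ->] ->].
congr (- _).
have cards : #|P :\: S| = #|Q :&: S :\ z|.
  have e1 := cardsID S P.
  have e2 : #|P :&: S| + #|Q :&: S| = n.+1.
    rewrite -cS -(cardsID P S).
    have -> : S :&: P = P :&: S by rewrite setIC.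
    congr (_ + _); apply: eq_card => j; rewrite !inE.
    case Sj: (j \in S); rewrite ?andbF //= ?andbT.
    have jp : j != p by apply: contraNneq pS => <-.
    move: (hS j Sj) (hPQ j); rewrite (negbTE jp) /=.
    by case: (j \in P); case: (j \in Q).
  have e3 : #|Q :&: S| = (#|Q :&: S :\ z|).+1.
    by rewrite (cardsD1 z (Q :&: S)) !inE zQ zS.
  move: e1 e2 e3; rewrite cP; lia.
transitivity (\prod_(j in P :\: S) (-1) * \prod_(j in Q :&: S :\ z) (-1) *
  (\prod_(b in P :\: S) w b z * \prod_(y in Q :&: S :\ z) (w y p / w y z)
     / \prod_(b in P :\: S) w b p)); last first.
  by rewrite !prodm1 cards -exprMn mulrN1 opprK expr1n mul1r.
rewrite !prodIf -!big_split -!prodf_div -!big_split /=.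
apply: eq_bigr => j _; rewrite /T /A !inE.
have zP : (z \in P) = false by exact: (disjointFl dPQ zQ).
case: (eqVneq j p) => [->|jp].
  by rewrite ?eqxx (negbTE pP) (negbTE pQ) (negbTE pS) eq_sym ?(negbTE zp) /= !(mul1r, mulr1, invr1).
case: (eqVneq j z) => [->|jz].
  by rewrite ?eqxx zP zQ zS ?(negbTE zp) /= !(mul1r, mulr1, invr1).
have wjp : w j p != 0 by exact: wnz.
have wjz : w j z != 0 by exact: wnz.
rewrite (wA z j).
case Pj: (j \in P); case Qj: (j \in Q); case Sj: (j \in S); rewrite /=;
  move: (hPQ j) (hS j); rewrite Pj Qj Sj (negbTE jp) /= => H1 H2.
all: try by [].
all: try by case: (H2 isT).
all: by field; rewrite ?oppr_eq0 ?wjp ?wjz ?oner_neq0.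
Qed.

Lemma cardPS (S : {set 'I_N}) : S \subset A ->
  #|P :&: S| + #|Q :&: S| = #|S :\ p|.
Proof.
move=> SA; rewrite -(cardsID P (S :\ p)).
have -> : (S :\ p) :&: P = P :&: S.
  by apply/setP => j; rewrite !inE; case: (eqVneq j p) => [->|jp]; rewrite ?(negbTE pP) ?andbF //= andbC.
congr (_ + _); apply: eq_card => j; rewrite !inE.
case: (eqVneq j p) => [->|jp] /=; first by rewrite (negbTE pQ) andbF.
case Sj: (j \in S); rewrite ?andbF //= ?andbT.
move: (subsetP SA j Sj) (hPQ j); rewrite !inE (negbTE jp) /=.
by case: (j \in P); case: (j \in Q).
Qed.

Lemma perA (S : {set 'I_N}) : S \subset A -> p \in S -> #|S| = n.+1 ->
  Tm S A = \sum_(z in Q :\: S) c p * d z / D z * Tm (S :\ p) (A :\ p :\ z).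
Proof.
move=> SA pS cS.
set T := A :\: S.
have WST : W S T != 0.
  apply: W_nz; rewrite -setI_eq0; apply/eqP/setP => j; rewrite !inE.
  by case: (j \in S).
have key z : z \in Q :\: S -> c p * d z / D z * Tm (S :\ p) (A :\ p :\ z) =
    Tm S A * (W S T / (D z * W (S :\ p) (T :\ z))).
  rewrite inE => /andP [zS zQ].
  have zT : z \in T by rewrite !inE zS zQ !orbT.
  have E : A :\ p :\ z :\: (S :\ p) = T :\ z.
    apply/setP => x; rewrite !inE; case: (eqVneq x p) => [->|xp] /=.
      by rewrite pS /= !andbF.
    by rewrite andbCA.
  have Dz := D_nz zQ.
  have W' : W (S :\ p) (T :\ z) != 0.
    apply: W_nz; rewrite -setI_eq0; apply/eqP/setP => j; rewrite !inE.
    by case: (j \in S) => //; rewrite !andbF.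
  rewrite /Tm E -/T (big_setD1 p pS) (big_setD1 z zT) /=.
  by field; rewrite WST Dz W' /=.
rewrite (eq_bigr _ key) -mulr_sumr.
rewrite -[LHS]mulr1; congr (_ * _).
have cS' : #|S :\ p| = n by move: (cardsD1 p S); rewrite pS cS add1n => -[].
have cPS := cardPS SA; rewrite cS' in cPS.
have cQS : #|Q :\: S| = (#|P :&: S|).+1.
  have := cardsID S Q; rewrite cQ; lia.
have BP : \prod_(b in P :&: S) w b p != 0.
  by apply: prod_nz => b; rewrite inE => /andP [bP _]; apply: wnz; apply: contraNneq pP => <-.
rewrite (eq_bigr (fun z => \prod_(b in P :&: S) w b z * \prod_(y in Q :\: S :\ z) (w y p / w y z)
     / \prod_(b in P :&: S) w b p)); last first.
  move=> z; rewrite inE => /andP [zS zQ]; exact: ratioA.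
rewrite -mulr_suml (lagr (n := #|P :&: S|)) ?divff //.
by rewrite !inE negb_and pQ orbT.
Qed.

Lemma perB (S : {set 'I_N}) : S \subset A -> p \notin S -> #|S| = n.+1 ->
  Tm S A = - \sum_(z in Q :&: S) c z * d p / D z * Tm (S :\ z) (A :\ p :\ z).
Proof.
move=> SA pS cS.
set T := A :\: S.
have WST : W S T != 0.
  apply: W_nz; rewrite -setI_eq0; apply/eqP/setP => j; rewrite !inE.
  by case: (j \in S).
have pT : p \in T by rewrite !inE pS eqxx.
have key z : z \in Q :&: S -> c z * d p / D z * Tm (S :\ z) (A :\ p :\ z) =
    Tm S A * (W S T / (D z * W (S :\ z) (T :\ p))).
  rewrite inE => /andP [zQ zS].
  have E : A :\ p :\ z :\: (S :\ z) = T :\ p.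
    apply/setP => x; rewrite !inE; case: (eqVneq x z) => [->|xz] /=.
      by rewrite zS /= !andbF.
    by rewrite andbCA.
  have Dz := D_nz zQ.
  have W' : W (S :\ z) (T :\ p) != 0.
    apply: W_nz; rewrite -setI_eq0; apply/eqP/setP => j; rewrite !inE.
    by case: (j \in S) => //; rewrite !andbF.
  rewrite /Tm E -/T (big_setD1 z zS) (big_setD1 p pT) /=.
  by field; rewrite WST Dz W' /=.
rewrite (eq_bigr _ key) -mulr_sumr.
rewrite -[LHS]mulr1 -mulrN; congr (_ * _).
have cS' : #|S :\ p| = n.+1 by move: (cardsD1 p S); rewrite (negbTE pS) cS.
have cPS := cardPS SA; rewrite cS' in cPS.
have cPS2 : #|Q :&: S| = (#|P :\: S|).+1.
  have := cardsID S P; rewrite cP; lia.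
have BP : \prod_(b in P :\: S) w b p != 0.
  by apply: prod_nz => b; rewrite inE => /andP [_ bP]; apply: wnz; apply: contraNneq pP => <-.
rewrite (eq_bigr (fun z => - (\prod_(b in P :\: S) w b z * \prod_(y in Q :&: S :\ z) (w y p / w y z)
     / \prod_(b in P :\: S) w b p))); last first.
  move=> z; rewrite inE => /andP [zQ zS]; exact: ratioB.
rewrite sumrN -mulr_suml (lagr (n := #|P :\: S|)) ?divff ?opprK //.
by rewrite !inE negb_and pQ.
Qed.

Lemma cardA : #|A| = (n.+1).*2.
Proof.
rewrite /A cardsU1 !inE negb_or pP pQ cardsU.
have -> : P :&: Q = set0 by apply/eqP; rewrite setI_eq0.
by rewrite cards0 cP cQ /= -addnn; lia.
Qed.

Lemma pA : p \in A. Proof. by rewrite /A !inE eqxx. Qed.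

Lemma cardAz z : z \in Q -> #|A :\ p :\ z| = n.*2.
Proof.
move=> zQ; have e1 := cardsD1 p A; rewrite pA cardA in e1.
have zAp : z \in A :\ p by rewrite !inE zQ !orbT andbT; apply: contraNneq pQ => <-.
have e2 := cardsD1 z (A :\ p); rewrite zAp in e2.
move: e1 e2 => /= ; rewrite -!addnn => e1 e2; rewrite e2 in e1; move/eqP: e1; rewrite addSn addnS !add1n !eqSS => /eqP ->; exact: eq_card.
Qed.

Lemma sum_add1 (a : 'I_N) (Pr : {set 'I_N} -> bool) (G : {set 'I_N} -> C) :
  \sum_(S | Pr S && (a \in S)) G S = \sum_(S' | Pr (a |: S') && (a \notin S')) G (a |: S').
Proof.
rewrite (reindex_onto (fun S' => a |: S') (fun S => S :\ a)); last first.
  by move=> S /andP [_ aS]; rewrite setD1K.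
apply: eq_bigl => S'; rewrite in_setU1 eqxx /= andbT; congr (_ && _).
by apply/eqP/idP => [<- | aS]; [rewrite !inE eqxx | exact: setU1K].
Qed.

Lemma dbl_eq (a b : nat) : (a.*2 == b.*2) = (a == b).
Proof. by rewrite -!muln2 eqn_pmul2r. Qed.

Lemma predA z (S' : {set 'I_N}) : z \in Q ->
  ((p |: S' \subset A) && (#|p |: S'|.*2 == #|A|) && (p \notin S') && (z \in Q :\: (p |: S')))
  = (S' \subset A :\ p :\ z) && (#|S'|.*2 == #|A :\ p :\ z|).
Proof.
move=> zQ; have zp : z != p by apply: contraNneq pQ => <-.
rewrite cardA cardAz // !subsetD1 subUset sub1set pA cardsU1 !inE zQ (negbTE zp) /=.
case pS: (p \in S'); rewrite /= ?andbF //=.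
by rewrite add1n dbl_eq eqSS dbl_eq; case: (S' \subset A); case: (z \in S'); case: (#|S'| == n).
Qed.

Lemma predB z (S' : {set 'I_N}) : z \in Q ->
  ((z |: S' \subset A) && (#|z |: S'|.*2 == #|A|) && (p \notin z |: S') && (z \notin S') && (z \in Q :&: (z |: S')))
  = (S' \subset A :\ p :\ z) && (#|S'|.*2 == #|A :\ p :\ z|).
Proof.
move=> zQ; have zp : z != p by apply: contraNneq pQ => <-.
have zA : z \in A by rewrite /A !inE zQ !orbT.
rewrite cardA cardAz // !subsetD1 subUset sub1set zA cardsU1 !inE zQ eqxx /= andbT (eq_sym p z) (negbTE zp) /=.
case zS: (z \in S'); rewrite /= ?andbF //=.
by rewrite add1n dbl_eq eqSS dbl_eq; case: (S' \subset A); case: (p \in S'); case: (#|S'| == n).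
Qed.

Lemma cond_card (S : {set 'I_N}) : (#|S|.*2 == #|A|) -> #|S| = n.+1.
Proof. by rewrite cardA dbl_eq => /eqP. Qed.

Lemma star : F A = \sum_(z in Q) (c p * d z - c z * d p) / D z * F (A :\ p :\ z).
Proof.
rewrite {1}/F (bigID (fun S : {set 'I_N} => p \in S)) /=.
under [RHS]eq_bigr do rewrite !mulrBl.
rewrite sumrB; congr (_ + _).
  transitivity (\sum_(S : {set 'I_N} | (S \subset A) && (#|S|.*2 == #|A|) && (p \in S))
     \sum_(z in Q :\: S) c p * d z / D z * Tm (S :\ p) (A :\ p :\ z)).
    apply: eq_bigr => S /andP [/andP [SA cS] pS]; apply: perA => //; exact: cond_card.
  rewrite sum_add1.
  under eq_bigr => S' /andP [_ pS'] do rewrite setU1K //.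
  rewrite (exchange_big_dep (fun z => z \in Q)) /=; last by move=> S' z _; rewrite inE => /andP [].
  apply: eq_bigr => z zQ; rewrite /F mulr_sumr; apply: eq_bigl => S'.
  by rewrite predA.
transitivity (\sum_(S : {set 'I_N} | (S \subset A) && (#|S|.*2 == #|A|) && (p \notin S))
   - \sum_(z in Q :&: S) c z * d p / D z * Tm (S :\ z) (A :\ p :\ z)).
  apply: eq_bigr => S /andP [/andP [SA cS] pS]; apply: perB => //; exact: cond_card.
rewrite sumrN; congr (- _).
rewrite (exchange_big_dep (fun z => z \in Q)) /=; last by move=> S' z _; rewrite inE => /andP [].
apply: eq_bigr => z zQ; rewrite /F mulr_sumr.
rewrite (eq_bigl (fun S : {set 'I_N} => ((S \subset A) && (#|S|.*2 == #|A|) && (p \notin S)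
   && (z \in Q :&: S)) && (z \in S))); last first.
  by move=> S; rewrite /= !inE; case: (z \in S); rewrite ?andbF ?andbT.
rewrite sum_add1.
under eq_bigr => S' /andP [_ zS'] do rewrite setU1K //.
apply: eq_bigl => S'.
by rewrite -(predB S' zQ) -!andbA; congr [&& _, _, _ & _]; rewrite andbC.
Qed.

End Star.

Definition V m (f : 'I_m -> 'I_N) := \prod_(i < m) \prod_(j < m | (i < j)%N) w (f i) (f j).

Lemma lift_ltn k (j : 'I_k.+1) (a b : 'I_k) : (bump j a < bump j b)%N = (a < b)%N.
Proof. by rewrite /bump; case: (leqP j a); case: (leqP j b); lia. Qed.

Lemma V_lift k (f : 'I_k.+1 -> 'I_N) (j : 'I_k.+1) :
  V f = V (fun a => f (lift j a)) * ((-1) ^+ j * \prod_(a < k) w (f j) (f (lift j a))).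
Proof.
rewrite /V (bigD1_ord j) //=.
rewrite (big_mkcond (fun b : 'I_k.+1 => (j < b)%N)) (bigD1_ord j) //= ltnn mul1r.
under [X in _ * X = _]eq_bigr => a _ do rewrite big_mkcond (bigD1_ord j) //=.
rewrite big_split /=.
under [X in _ * (_ * X) = _]eq_bigr => a _ do under eq_bigr => b _ do rewrite lift_ltn.
under [X in _ * (_ * X) = _]eq_bigr => a _ do rewrite -big_mkcond.
rewrite mulrA [LHS]mulrC; congr (_ * _).
have -> : (-1) ^+ j = \prod_(a < k) (if (a < j)%N then -1 else 1) :> C.
  rewrite -big_mkcond (big_ord_narrow (n1 := j) (n2 := k) (ltn_ord j)).
  by rewrite prodr_const card_ord.
rewrite -!big_split /=; apply: eq_bigr => a _.
rewrite /= /bump; case: (leqP j a) => ja /=.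
  by rewrite ifT ?ifF ?mulr1 ?mul1r //; lia.
by rewrite ifF ?ifT ?mul1r ?(wA (f (lift j a))) ?mulN1r //; lia.
Qed.

Lemma img_lift k (h : 'I_k.+1 -> 'I_N) (j : 'I_k.+1) :
  [set h i | i : 'I_k.+1] = h j |: [set h (lift j b) | b : 'I_k].
Proof.
apply/setP => x; rewrite !inE; apply/imsetP/idP.
  move=> [i _ ->]; case: (unliftP j i) => [b ->|->]; last by rewrite eqxx.
  by apply/orP; right; apply/imsetP; exists b.
case/orP => [/eqP ->|/imsetP [b _ ->]]; first by exists j.
by exists (lift j b).
Qed.

Lemma img_lift_D k (h : 'I_k.+1 -> 'I_N) (j : 'I_k.+1) : injective h ->
  [set h i | i : 'I_k.+1] :\ h j = [set h (lift j b) | b : 'I_k].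
Proof.
move=> hi; rewrite (img_lift h j) setU1K //; apply/imsetP => -[b _ /hi E].
by move: (neq_lift j b); rewrite -E eqxx.
Qed.

Lemma V_nz m (h : 'I_m -> 'I_N) : injective h -> V h != 0.
Proof.
move=> hi; rewrite prodf_seq_neq0; apply/allP => i _; apply/implyP => _.
rewrite prodf_seq_neq0; apply/allP => j _; apply/implyP => ij; apply: wnz.
by apply: contraTneq ij => /hi ->; rewrite ltnn.
Qed.

Definition Mx m (f g : 'I_m -> 'I_N) : 'M[C]_m :=
  \matrix_(i, j) ((c (f i) * d (g j) - c (g j) * d (f i)) / w (f i) (g j)).
Definition Dm m (f g : 'I_m -> 'I_N) := \det (Mx f g) / (V f * V g).

Lemma F0 : F set0 = 1.
Proof.
rewrite /F (big_pred1 set0); last first.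
  by move=> S; rewrite subset0 cards0 /=; case: (eqVneq S set0) => [->|]; rewrite ?cards0 ?andbF.
by rewrite /Tm /W setD0 !big_set0 mulr1 invr1 mulr1.
Qed.

Lemma DmF m : forall f g : 'I_m -> 'I_N, injective f -> injective g -> (forall i j, f i != g j) ->
  Dm f g = (-1) ^+ 'C(m, 2) * F ([set f i | i : 'I_m] :|: [set g i | i : 'I_m]).
Proof.
elim: m => [|k IH] f g fi gi fg.
  rewrite /Dm det_mx00 /V !big_ord0 mulr1 divr1.
  have -> : [set f i | i : 'I_0] :|: [set g i | i : 'I_0] = set0.
    by apply/setP => x; rewrite !inE; apply/negbTE/orP => -[] /imsetP [[]].
  by rewrite F0 mulr1.
pose p := f ord_max; pose f' := fun a => f (lift ord_max a).
pose P := [set f' a | a : 'I_k]; pose Q := [set g i | i : 'I_k.+1].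
have f'i : injective f' by move=> a b /fi /lift_inj.
have pP : p \notin P.
  apply/imsetP => -[a _ /fi E]; by move: (neq_lift (@ord_max k) a); rewrite -E eqxx.
have pQ : p \notin Q by apply/imsetP => -[i _ E]; move: (fg ord_max i); rewrite -E eqxx.
have dPQ : [disjoint P & Q].
  rewrite -setI_eq0; apply/eqP/setP => x; rewrite !inE; apply/negbTE/andP.
  by move=> [/imsetP [a _ ->] /imsetP [i _ E]]; move: (fg (lift ord_max a) i); rewrite -E eqxx.
have cP : #|P| = k by rewrite card_imset // card_ord.
have cQ : #|Q| = k.+1 by rewrite card_imset // card_ord.
have AE : [set f i | i : 'I_k.+1] :|: Q = A p P Q by rewrite (img_lift f ord_max) /A setUA.
rewrite AE (star pP pQ dPQ cP cQ) mulr_sumr.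
rewrite big_imset /=; last by move=> x y _ _; exact: gi.
rewrite /Dm (expand_det_row _ ord_max) mulr_suml (V_lift f ord_max).
apply: eq_bigr => j _.
pose g' := fun b => g (lift j b).
have g'i : injective g' by move=> a b /gi /lift_inj.
rewrite (V_lift g j) /cofactor.
have -> : row' ord_max (col' j (Mx f g)) = Mx f' g' by apply/matrixP => a b; rewrite !mxE.
have IHj := IH f' g' f'i g'i (fun a b => fg _ _).
have Vf' : V f' != 0 by apply: V_nz.
have Vg' : V g' != 0 by apply: V_nz.
have -> : \det (Mx f' g') = (-1) ^+ 'C(k, 2) * F ([set f' i | i : 'I_k] :|: [set g' i | i : 'I_k]) * (V f' * V g').
  by rewrite -IHj /Dm divfK // mulf_neq0.
have gjP : (g j \in P) = false by apply: (disjointFl dPQ); rewrite /Q imset_f.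
have -> : A p P Q :\ p :\ g j = [set f' i | i : 'I_k] :|: [set g' i | i : 'I_k].
  rewrite /A setU1K; last by rewrite !inE negb_or pP pQ.
  rewrite setDUl (img_lift_D j gi).
  congr (_ :|: _); apply/setP => x; rewrite !inE.
  by case: (eqVneq x (g j)) => [->|]; rewrite ?gjP.
have gjp : w p (g j) != 0 by apply: wnz; apply: fg.
have Pf : \prod_(a < k) w p (f' a) != 0.
  rewrite prodf_seq_neq0; apply/allP => a _; apply/implyP => _; apply: wnz.
  by apply/eqP => /fi E; move: (neq_lift (@ord_max k) a); rewrite -E eqxx.
have Pg : \prod_(b < k) w (g j) (g' b) != 0.
  rewrite prodf_seq_neq0; apply/allP => a _; apply/implyP => _; apply: wnz.
  by apply/eqP => /gi E; move: (neq_lift j a); rewrite -E eqxx.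
rewrite /D /P (img_lift_D j gi) !big_imset /=; last 2 first.
- by move=> x y _ _; exact: g'i.
- by move=> x y _ _; exact: f'i.
have -> : \prod_(a in 'I_k) w (f' a) p = (-1) ^+ k * \prod_(a < k) w p (f' a).
  by under eq_bigr do rewrite wA; rewrite prodrN cardT size_enum_ord.
rewrite mxE binS bin1 !exprD /=.
by field; rewrite Pg Pf !signr_eq0 gjp Vg' Vf'.
Qed.

End Core.

Lemma all_img m (h : 'I_(m + m) -> 'I_(m + m)) : injective h ->
  [set h (lshift m i) | i : 'I_m] :|: [set h (rshift m i) | i : 'I_m] = setT.
Proof.
move=> hi; apply/setP => y; rewrite !inE.
rewrite -(f_invF hi y); case: (splitP (invF hi y)) => [a E | b E].
  by apply/orP; left; apply/imsetP; exists a => //; congr h; apply: val_inj.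
by apply/orP; right; apply/imsetP; exists b => //; congr h; apply: val_inj.
Qed.

Theorem mainTheorem1 (C : numClosedFieldType) (X : Type)
    (phi1 phi2 : X -> X -> C) (m : nat) (hm : (1 <= m)%N)
    (h1a : antisym phi1) (h1p : plucker3 phi1)
    (h2a : antisym phi2) (h2p : plucker3 phi2)
    (x : 'I_(m + m) -> X)
    (hx : forall i j : 'I_(m + m), i != j -> phi2 (x i) (x j) != 0)
    (s : 'S_(m + m)) :
  Delta phi1 phi2 (fun i => x (s i)) = Delta phi1 phi2 x.
Proof.
pose w := fun i j : 'I_(m + m) => phi2 (x i) (x j).
have wA : forall i j, w i j = - w j i by move=> i j; exact: h2a.
have w0 : forall i, w i i = 0.
  move=> i; apply/eqP; have := h2a (x i) (x i); move/eqP.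
  by rewrite -addr_eq0 -mulr2n mulrn_eq0.
have wP : forall i j k l, w i j * w k l - w i k * w j l + w i l * w j k = 0.
  by move=> i j k l; exact: h2p.
have wnz : forall i j, i != j -> w i j != 0 by move=> i j; exact: hx.
have [c [d rep]] : exists c d : 'I_(m + m) -> C,
    forall i j, phi1 (x i) (x j) = c i * d j - c j * d i.
  case: (boolP [exists u, exists v, phi1 (x u) (x v) != 0]).
    case/existsP => u /existsP [v nz].
    exists (fun i => phi1 (x u) (x i) / phi1 (x u) (x v)), (fun i => phi1 (x v) (x i)).
    move=> i j; have H := h1p (x u) (x v) (x i) (x j).
    have E : phi1 (x u) (x v) * phi1 (x i) (x j) =
      phi1 (x u) (x i) * phi1 (x v) (x j) - phi1 (x u) (x j) * phi1 (x v) (x i).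
      by rewrite -(subr0 (phi1 (x u) (x v) * phi1 (x i) (x j))) -H; ring.
    by apply: (mulfI nz); rewrite E; field.
  move=> /existsPn H0; exists (fun=> 0), (fun=> 0) => i j.
  move: (H0 i) => /existsPn /(_ j); rewrite negbK => /eqP ->.
  by rewrite !mulr0 subr0.
have key : forall h : 'I_(m + m) -> 'I_(m + m), injective h ->
    Delta phi1 phi2 (fun i => x (h i)) = (-1) ^+ 'C(m, 2) * F w c d setT.
  move=> h hi.
  have -> : Delta phi1 phi2 (fun i => x (h i)) =
      Dm w c d (fun i => h (lshift m i)) (fun i => h (rshift m i)).
    rewrite /Delta /Dm /V; congr (\det _ / _); apply/matrixP => i j; rewrite !mxE rep.
    by [].
  rewrite (DmF wA w0 wP wnz c d); first by rewrite all_img.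
  - by move=> a b /hi /lshift_inj.
  - by move=> a b /hi /rshift_inj.
  - by move=> a b; apply/eqP => /hi /eqP; rewrite eq_lrshift.
rewrite (key s (@perm_inj _ s)); symmetry.
exact: (key id (@inj_id _)).
Qed.
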